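(* In the isotropic setting below, let $F,F_p\in\mathrm{GL}^+(3)$, $C_p=F_p^TF_p$, $U_p=\sqrt{C_p}$, $R_p=F_pU_p^{-1}\in\mathrm{SO}(3)$. Then $$\mathring\Sigma=R_p^T\Sigma_eR_p=U_p^{-1}\widetilde\Sigma\,U_p,\qquad \widetilde\Sigma=U_p\mathring\Sigma\,U_p^{-1},\qquad \|\mathrm{dev}_3\mathring\Sigma\|=\|\mathrm{dev}_3\Sigma_e\|,$$ and $$\mathrm{tr}\big[(\mathrm{dev}_3\widetilde\Sigma)^2\big]=\|\mathrm{dev}_3(U_p^{-1}\widetilde\Sigma U_p)\|^2=\|\mathrm{dev}_3\mathring\Sigma\|^2\ge0.$$ In particular $\sqrt{\mathrm{tr}[(\mathrm{dev}_3\widetilde\Sigma)^2]}=\|\mathrm{dev}_3\Sigma_e\|=\|\mathrm{dev}_3\tau_e\|$ is well defined.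
   Context: $W:\mathrm{GL}^+(3)\to\mathbb{R}$ objective and isotropic ($W(QFR)=W(F)$, $Q,R\in\mathrm{SO}(3)$), written $W(F_e)=\Psi(I_1(C_e),I_2(C_e),I_3(C_e))$ with $\Psi\in C^1$; $\widetilde W(X)=\Psi(\mathrm{tr}X,\mathrm{tr}(\mathrm{Cof}X),\det X)$. $F_e=FF_p^{-1}$, $C=F^TF$, $C_e=F_e^TF_e$. $\langle X,Y\rangle=\mathrm{tr}(XY^T)$, $\|\cdot\|$ Frobenius norm, $D$ gradient, $\mathrm{dev}_3X=X-\frac13\mathrm{tr}(X)\mathbb{1}$, $\mathrm{sym}X=\frac12(X+X^T)$. $\Sigma_e=F_e^TDW(F_e)$, $\tau_e=DW(F_e)F_e^T$ (symmetric for isotropic $W$). $\widetilde\Sigma:=2\,C\,D\widetilde W(CC_p^{-1})\,C_p^{-1}$. Grandi–Stefanelli stress: $\mathring\Sigma:=2\,U_p^{-1}\,\mathrm{sym}\big[C\,D\widetilde W(CC_p^{-1})\big]\,U_p^{-1}\in\mathrm{Sym}(3)$. *)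

(* Defs.v *)
From Stdlib Require Export Reals.
Open Scope R_scope.

Record M3 : Type := mkM3 {
  m11 : R; m12 : R; m13 : R;
  m21 : R; m22 : R; m23 : R;
  m31 : R; m32 : R; m33 : R }.

Definition mId : M3 := mkM3 1 0 0 0 1 0 0 0 1.

Definition madd (A B : M3) : M3 :=
  mkM3 (m11 A + m11 B) (m12 A + m12 B) (m13 A + m13 B)
       (m21 A + m21 B) (m22 A + m22 B) (m23 A + m23 B)
       (m31 A + m31 B) (m32 A + m32 B) (m33 A + m33 B).

Definition mscal (s : R) (A : M3) : M3 :=
  mkM3 (s * m11 A) (s * m12 A) (s * m13 A)
       (s * m21 A) (s * m22 A) (s * m23 A)
       (s * m31 A) (s * m32 A) (s * m33 A).

Definition msub (A B : M3) : M3 := madd A (mscal (-1) B).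

Definition mmul (A B : M3) : M3 :=
  mkM3 (m11 A * m11 B + m12 A * m21 B + m13 A * m31 B)
       (m11 A * m12 B + m12 A * m22 B + m13 A * m32 B)
       (m11 A * m13 B + m12 A * m23 B + m13 A * m33 B)
       (m21 A * m11 B + m22 A * m21 B + m23 A * m31 B)
       (m21 A * m12 B + m22 A * m22 B + m23 A * m32 B)
       (m21 A * m13 B + m22 A * m23 B + m23 A * m33 B)
       (m31 A * m11 B + m32 A * m21 B + m33 A * m31 B)
       (m31 A * m12 B + m32 A * m22 B + m33 A * m32 B)
       (m31 A * m13 B + m32 A * m23 B + m33 A * m33 B).

Definition mtr (A : M3) : M3 :=
  mkM3 (m11 A) (m21 A) (m31 A)
       (m12 A) (m22 A) (m32 A)
       (m13 A) (m23 A) (m33 A).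

Definition trace (A : M3) : R := m11 A + m22 A + m33 A.

Definition det (A : M3) : R :=
  m11 A * (m22 A * m33 A - m23 A * m32 A)
  - m12 A * (m21 A * m33 A - m23 A * m31 A)
  + m13 A * (m21 A * m32 A - m22 A * m31 A).

(* cofactor matrix: Cof A = det A * A^{-T} *)
Definition cof (A : M3) : M3 :=
  mkM3 (m22 A * m33 A - m23 A * m32 A)
       (- (m21 A * m33 A - m23 A * m31 A))
       (m21 A * m32 A - m22 A * m31 A)
       (- (m12 A * m33 A - m13 A * m32 A))
       (m11 A * m33 A - m13 A * m31 A)
       (- (m11 A * m32 A - m12 A * m31 A))
       (m12 A * m23 A - m13 A * m22 A)
       (- (m11 A * m23 A - m13 A * m21 A))
       (m11 A * m22 A - m12 A * m21 A).

(* inverse (meaningful when det A <> 0) *)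
Definition minv (A : M3) : M3 := mscal (/ det A) (mtr (cof A)).

Definition inner (A B : M3) : R := trace (mmul A (mtr B)).
Definition mnorm (A : M3) : R := sqrt (inner A A).

Definition dev3 (A : M3) : M3 := msub A (mscal (trace A / 3) mId).
Definition msym (A : M3) : M3 := mscal (1/2) (madd A (mtr A)).

Definition symmetric (A : M3) : Prop := mtr A = A.

Definition qform (A : M3) (x y z : R) : R :=
  x * (m11 A * x + m12 A * y + m13 A * z)
  + y * (m21 A * x + m22 A * y + m23 A * z)
  + z * (m31 A * x + m32 A * y + m33 A * z).

Definition posdef (A : M3) : Prop :=
  forall x y z : R, ~ (x = 0 /\ y = 0 /\ z = 0) -> qform A x y z > 0.

Definition is_gradient (f : M3 -> R) (G : M3) (X : M3) : Prop :=
  forall eps : R, eps > 0 -> exists delta : R, delta > 0 /\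
    forall H : M3, mnorm H < delta ->
      Rabs (f (madd X H) - f X - inner G H) <= eps * mnorm H.

(* the open positive octant (0,oo)^3, domain of the invariants of SPD matrices *)
Definition octant (a b c : R) : Prop := 0 < a /\ 0 < b /\ 0 < c.

Definition cont3_octant (g : R -> R -> R -> R) : Prop :=
  forall a b c, octant a b c -> forall eps, eps > 0 -> exists delta, delta > 0 /\
    forall a' b' c', Rabs (a' - a) < delta -> Rabs (b' - b) < delta ->
      Rabs (c' - c) < delta -> Rabs (g a' b' c' - g a b c) < eps.

Definition C1_octant (Psi d1 d2 d3 : R -> R -> R -> R) : Prop :=
  (forall a b c, octant a b c ->
     derivable_pt_lim (fun t => Psi t b c) a (d1 a b c) /\
     derivable_pt_lim (fun t => Psi a t c) b (d2 a b c) /\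
     derivable_pt_lim (fun t => Psi a b t) c (d3 a b c)) /\
  cont3_octant d1 /\ cont3_octant d2 /\ cont3_octant d3.

Definition I1 (X : M3) : R := trace X.
Definition I2 (X : M3) : R := trace (cof X).
Definition I3 (X : M3) : R := det X.

Definition W_of (Psi : R -> R -> R -> R) (F : M3) : R :=
  let C := mmul (mtr F) F in Psi (I1 C) (I2 C) (I3 C).
Definition Wt_of (Psi : R -> R -> R -> R) (X : M3) : R :=
  Psi (trace X) (trace (cof X)) (det X).

(* Main.v *)
Require Import Defs.
From Stdlib Require Import Lra Psatz.


Ltac dM := repeat match goal with A : M3 |- _ => destruct A end.
Ltac ev := cbv beta iota delta [dev3 msym inner minv msub mmul madd mscal mtr mId trace det cof qform m11 m12 m13 m21 m22 m23 m31 m32 m33].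
Ltac evall := cbv beta iota delta [dev3 msym inner minv msub mmul madd mscal mtr mId trace det cof qform m11 m12 m13 m21 m22 m23 m31 m32 m33] in *.
Ltac mxr := intros; dM; evall; lazymatch goal with |- mkM3 _ _ _ _ _ _ _ _ _ = _ => f_equal; ring | _ => ring end.

Lemma mmul_assoc A B C : mmul (mmul A B) C = mmul A (mmul B C). Proof. mxr. Qed.
Lemma mmul_1l A : mmul mId A = A. Proof. mxr. Qed.
Lemma mmul_1r A : mmul A mId = A. Proof. mxr. Qed.
Lemma mtr_mmul A B : mtr (mmul A B) = mmul (mtr B) (mtr A). Proof. mxr. Qed.
Lemma mtr_mtr A : mtr (mtr A) = A. Proof. mxr. Qed.
Lemma mtr_mId : mtr mId = mId. Proof. mxr. Qed.
Lemma mmul_maddr A B C : mmul A (madd B C) = madd (mmul A B) (mmul A C). Proof. mxr. Qed.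
Lemma mmul_maddl A B C : mmul (madd A B) C = madd (mmul A C) (mmul B C). Proof. mxr. Qed.
Lemma mmul_scal_l s A B : mmul (mscal s A) B = mscal s (mmul A B). Proof. mxr. Qed.
Lemma mmul_scal_r s A B : mmul A (mscal s B) = mscal s (mmul A B). Proof. mxr. Qed.
Lemma mtr_madd A B : mtr (madd A B) = madd (mtr A) (mtr B). Proof. mxr. Qed.
Lemma mtr_mscal s A : mtr (mscal s A) = mscal s (mtr A). Proof. mxr. Qed.
Lemma det_mmul A B : det (mmul A B) = det A * det B. Proof. mxr. Qed.
Lemma det_mtr A : det (mtr A) = det A. Proof. mxr. Qed.
Lemma trace_comm A B : trace (mmul A B) = trace (mmul B A). Proof. mxr. Qed.
Lemma trace_madd A B : trace (madd A B) = trace A + trace B. Proof. mxr. Qed.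
Lemma trace_mscal s A : trace (mscal s A) = s * trace A. Proof. mxr. Qed.
Lemma trace_mtr A : trace (mtr A) = trace A. Proof. mxr. Qed.
Lemma trcof_comm A B : trace (cof (mmul A B)) = trace (cof (mmul B A)). Proof. mxr. Qed.
Lemma mscal_mscal s t A : mscal s (mscal t A) = mscal (s*t) A. Proof. mxr. Qed.
Lemma mscal_1 A : mscal 1 A = A. Proof. mxr. Qed.

Lemma minv_l A : det A <> 0 -> mmul (minv A) A = mId.
Proof. intros H; destruct A; evall; f_equal; field; auto. Qed.
Lemma minv_r A : det A <> 0 -> mmul A (minv A) = mId.
Proof. intros H; destruct A; evall; f_equal; field; auto. Qed.


Lemma inv_unique A B : mmul A B = mId -> det A <> 0 -> B = minv A.
Proof. intros H HA. rewrite <- (mmul_1l B), <- (minv_l A HA), mmul_assoc, H, mmul_1r. reflexivity. Qed.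

Lemma det_minv A : det A <> 0 -> det (minv A) = / det A.
Proof. intros HA. assert (H := f_equal det (minv_l A HA)). rewrite det_mmul in H.
  replace (det mId) with 1 in H by (ev; ring).
  apply Rmult_eq_reg_r with (det A); auto. rewrite H. field; auto. Qed.

Lemma det_minv_nz A : det A <> 0 -> det (minv A) <> 0.
Proof. intros HA; rewrite det_minv; auto; apply Rinv_neq_0_compat; auto. Qed.

Lemma minv_mtr A : det A <> 0 -> minv (mtr A) = mtr (minv A).
Proof. intros HA. symmetry. apply inv_unique. rewrite <- mtr_mmul, minv_l, mtr_mId; auto.
  rewrite det_mtr; auto. Qed.

Lemma minv_mmul A B : det A <> 0 -> det B <> 0 -> minv (mmul A B) = mmul (minv B) (minv A).
Proof. intros HA HB. symmetry. apply inv_unique.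
  rewrite mmul_assoc, <- (mmul_assoc B), minv_r, mmul_1l, minv_r; auto.
  rewrite det_mmul. apply Rmult_integral_contrapositive; auto. Qed.

Lemma minv_sym A : det A <> 0 -> mtr A = A -> mtr (minv A) = minv A.
Proof. intros HA HS. rewrite <- minv_mtr, HS; auto. Qed.

Lemma posdef_det U : symmetric U -> posdef U -> det U > 0.
Proof.
  intros HS HP. unfold symmetric in HS. destruct U as [a b c d e f g h i].
  evall. injection HS; intros.
  assert (Ha : qform (mkM3 a b c d e f g h i) 1 0 0 > 0) by (apply HP; lra).
  assert (Hb : qform (mkM3 a b c d e f g h i) (-b) a 0 > 0) by (apply HP; intros [K1 [K2 K3]]; evall; lra).
  evall.
  set (c33 := a*e - b*d).
  assert (Hc33 : c33 > 0).
  { unfold c33. subst. nra. }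
  assert (Hv : qform (mkM3 a b c d e f g h i) (b*f - c*e) (-(a*f - c*d)) c33 > 0)
    by (apply HP; intros [K1 [K2 K3]]; lra).
  evall.
  assert (Hv' : (a * (e * i - f * h) - b * (d * i - f * g) + c * (d * h - e * g)) * c33 > 0).
  { subst. unfold c33 in *. nra. }
  nra.
Qed.


Lemma inner_nonneg A : 0 <= inner A A.
Proof. destruct A; ev. nra. Qed.
Lemma inner_sym A B : inner A B = inner B A. Proof. mxr. Qed.
Lemma inner_addl A B C : inner (madd A B) C = inner A C + inner B C. Proof. mxr. Qed.
Lemma inner_scal_l s A B : inner (mscal s A) B = s * inner A B. Proof. mxr. Qed.
Lemma inner_scal_r s A B : inner A (mscal s B) = s * inner A B. Proof. mxr. Qed.
Lemma inner_mtr A B : inner (mtr A) (mtr B) = inner A B. Proof. mxr. Qed.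

Lemma inner_eq0 A B : inner (msub A B) (msub A B) = 0 -> A = B.
Proof. destruct A as [a1 a2 a3 a4 a5 a6 a7 a8 a9], B as [b1 b2 b3 b4 b5 b6 b7 b8 b9];
  ev; intros H.
  assert (S1 := Rle_0_sqr (a1 - b1)); assert (S2 := Rle_0_sqr (a2 - b2)); assert (S3 := Rle_0_sqr (a3 - b3));
  assert (S4 := Rle_0_sqr (a4 - b4)); assert (S5 := Rle_0_sqr (a5 - b5)); assert (S6 := Rle_0_sqr (a6 - b6));
  assert (S7 := Rle_0_sqr (a7 - b7)); assert (S8 := Rle_0_sqr (a8 - b8)); assert (S9 := Rle_0_sqr (a9 - b9)).
  unfold Rsqr in *.
  assert (H' : (a1 - b1) * (a1 - b1) + (a2 - b2) * (a2 - b2) + (a3 - b3) * (a3 - b3) + (a4 - b4) * (a4 - b4) + (a5 - b5) * (a5 - b5) + (a6 - b6) * (a6 - b6) + (a7 - b7) * (a7 - b7) + (a8 - b8) * (a8 - b8) + (a9 - b9) * (a9 - b9) = 0) by (rewrite <- H; ring).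
  f_equal; apply Rminus_diag_uniq; apply Rsqr_0_uniq; unfold Rsqr; lra. Qed.

Lemma inner_zero_r A : inner A (mscal 0 A) = 0.
Proof. rewrite inner_scal_r; ring. Qed.

Lemma mnorm_nonneg A : 0 <= mnorm A. Proof. apply sqrt_pos. Qed.
Lemma mnorm_sq A : mnorm A * mnorm A = inner A A.
Proof. apply sqrt_sqrt, inner_nonneg. Qed.
Lemma mnorm_mtr A : mnorm (mtr A) = mnorm A.
Proof. unfold mnorm; rewrite inner_mtr; auto. Qed.

Lemma CS_sq A B : inner A B * inner A B <= inner A A * inner B B.
Proof.
  assert (Hq : forall t, 0 <= inner A A - 2 * t * inner A B + t * t * inner B B).
  { intros t. assert (E : inner (msub A (mscal t B)) (msub A (mscal t B)) =
        inner A A - 2 * t * inner A B + t * t * inner B B) by mxr.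
    rewrite <- E; apply inner_nonneg. }
  destruct (Req_dec (inner B B) 0) as [H0|H0].
  - assert (HB : B = mscal 0 B).
    { apply inner_eq0. replace (msub B (mscal 0 B)) with B by mxr. auto. }
    assert (HAB : inner A B = 0) by (rewrite HB, inner_scal_r; ring).
    rewrite HAB. pose proof (inner_nonneg A); pose proof (inner_nonneg B); nra.
  - assert (HBp : 0 < inner B B) by (pose proof (inner_nonneg B); lra).
    specialize (Hq (inner A B / inner B B)).
    assert (0 <= inner A A * inner B B - inner A B * inner A B).
    { replace (inner A A * inner B B - inner A B * inner A B) with
        (inner B B * (inner A A - 2 * (inner A B / inner B B) * inner A B +
          (inner A B / inner B B) * (inner A B / inner B B) * inner B B)) by (field; lra).
      apply Rmult_le_pos; lra. }
    lra.
Qed.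

Lemma sq_le_norm x y : 0 <= y -> x * x <= y * y -> x <= y.
Proof. intros. nra. Qed.

Lemma CS A B : Rabs (inner A B) <= mnorm A * mnorm B.
Proof.
  apply sq_le_norm. apply Rmult_le_pos; apply mnorm_nonneg.
  rewrite <- Rabs_mult, Rabs_pos_eq by nra.
  replace (mnorm A * mnorm B * (mnorm A * mnorm B)) with ((mnorm A * mnorm A) * (mnorm B * mnorm B)) by ring.
  rewrite !mnorm_sq. apply CS_sq.
Qed.

Lemma mnorm_scal t A : mnorm (mscal t A) = Rabs t * mnorm A.
Proof.
  unfold mnorm. rewrite inner_scal_l, inner_scal_r, <- Rmult_assoc.
  rewrite sqrt_mult_alt by nra. f_equal. rewrite <- sqrt_Rsqr_abs. unfold Rsqr; auto.
Qed.

Lemma mnorm_tri A B : mnorm (madd A B) <= mnorm A + mnorm B.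
Proof.
  apply sq_le_norm. pose proof (mnorm_nonneg A); pose proof (mnorm_nonneg B); lra.
  rewrite mnorm_sq. replace (inner (madd A B) (madd A B)) with (inner A A + 2 * inner A B + inner B B) by mxr.
  pose proof (CS A B). pose proof (Rle_abs (inner A B)).
  rewrite <- (mnorm_sq A), <- (mnorm_sq B). nra.
Qed.

Lemma cs3 x1 x2 x3 y1 y2 y3 :
  (x1*y1 + x2*y2 + x3*y3) * (x1*y1 + x2*y2 + x3*y3) <= (x1*x1+x2*x2+x3*x3)*(y1*y1+y2*y2+y3*y3).
Proof.
  pose proof (Rle_0_sqr (x1*y2-x2*y1)); pose proof (Rle_0_sqr (x1*y3-x3*y1)); pose proof (Rle_0_sqr (x2*y3-x3*y2)).
  unfold Rsqr in *.
  assert (E : (x1*x1+x2*x2+x3*x3)*(y1*y1+y2*y2+y3*y3) - (x1*y1 + x2*y2 + x3*y3) * (x1*y1 + x2*y2 + x3*y3) =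
    (x1*y2-x2*y1)*(x1*y2-x2*y1) + (x1*y3-x3*y1)*(x1*y3-x3*y1) + (x2*y3-x3*y2)*(x2*y3-x3*y2)) by ring.
  lra.
Qed.

Lemma inner_mul_le A B : inner (mmul A B) (mmul A B) <= inner A A * inner B B.
Proof.
  destruct A as [a1 a2 a3 a4 a5 a6 a7 a8 a9], B as [b1 b2 b3 b4 b5 b6 b7 b8 b9].
  ev.
  eapply Rle_trans.
  { repeat apply Rplus_le_compat; apply cs3. }
  right; ring.
Qed.

Lemma mnorm_mul A B : mnorm (mmul A B) <= mnorm A * mnorm B.
Proof.
  apply sq_le_norm. apply Rmult_le_pos; apply mnorm_nonneg.
  rewrite mnorm_sq. replace (mnorm A * mnorm B * (mnorm A * mnorm B)) with ((mnorm A * mnorm A) * (mnorm B * mnorm B)) by ring.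
  rewrite !mnorm_sq. apply inner_mul_le.
Qed.


Lemma id3 A G B H : inner (mmul (mmul (mtr A) G) (mtr B)) H = inner G (mmul (mmul A H) B).
Proof. unfold inner. rewrite !mtr_mmul, !mmul_assoc. rewrite trace_comm, !mmul_assoc. reflexivity. Qed.
Lemma inner_addr A B C : inner A (madd B C) = inner A B + inner A C. Proof. mxr. Qed.
Lemma inner_mul1 F G H : inner G (mmul (mtr F) H) = inner (mmul F G) H.
Proof. unfold inner. rewrite !mtr_mmul, mtr_mtr, <- mmul_assoc, trace_comm, mmul_assoc. reflexivity. Qed.
Lemma inner_mul2 F G H : inner G (mmul (mtr H) F) = inner (mmul F (mtr G)) H.
Proof. unfold inner. rewrite !mtr_mmul, !mtr_mtr.
  rewrite <- (trace_mtr (mmul G (mmul (mtr F) H))), !mtr_mmul, !mtr_mtr, mmul_assoc, trace_comm. reflexivity. Qed.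
Lemma id7 F G H : inner (mmul F (madd G (mtr G))) H = inner G (madd (madd (mmul (mtr F) H) (mmul (mtr H) F)) (mmul (mtr H) H)) - inner G (mmul (mtr H) H).
Proof. rewrite !inner_addr, inner_mul1, inner_mul2, mmul_maddr, inner_addl. ring. Qed.

Lemma id1 G G' : inner (msub G G') (msub G G') = inner G (msub G G') - inner G' (msub G G'). Proof. mxr. Qed.
Lemma id5 G H : inner (mtr G) H = inner G (mtr H). Proof. mxr. Qed.
Lemma id6 F H : mmul (mtr (madd F H)) (madd F H) = madd (mmul (mtr F) F) (madd (madd (mmul (mtr F) H) (mmul (mtr H) F)) (mmul (mtr H) H)). Proof. mxr. Qed.

Lemma is_gradient_ext f g G X : (forall Y, f Y = g Y) -> is_gradient f G X -> is_gradient g G X.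
Proof. intros E H eps He. destruct (H eps He) as [d [Hd Hf]]. exists d; split; auto.
  intros K HK. rewrite <- !E. auto. Qed.

Lemma grad_dir f G X K : is_gradient f G X -> forall eps, eps > 0 -> exists delta, delta > 0 /\
  forall t, Rabs t < delta -> Rabs (f (madd X (mscal t K)) - f X - t * inner G K) <= eps * (Rabs t * mnorm K).
Proof.
  intros Hg eps He. destruct (Hg eps He) as [d [Hd Hf]].
  pose proof (mnorm_nonneg K).
  exists (d / (mnorm K + 1)). split. apply Rdiv_lt_0_compat; lra.
  intros t Ht. rewrite <- mnorm_scal, <- inner_scal_r. apply Hf.
  rewrite mnorm_scal. pose proof (Rabs_pos t).
  apply Rlt_le_trans with (d / (mnorm K + 1) * (mnorm K + 1)).
  - apply Rle_lt_trans with (Rabs t * (mnorm K + 1)). nra.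
    apply Rmult_lt_compat_r; lra.
  - right; field; lra.
Qed.

Lemma small_zero a b : 0 <= b -> (forall eps, eps > 0 -> Rabs a <= eps * b) -> a = 0.
Proof.
  intros Hb H. destruct (Req_dec a 0); auto. exfalso.
  assert (Ha : Rabs a > 0) by (apply Rabs_pos_lt; auto).
  specialize (H (Rabs a / (2 * (b + 1)))).
  assert (Rabs a <= Rabs a / (2 * (b + 1)) * b) by (apply H; apply Rdiv_lt_0_compat; lra).
  assert (Rabs a / (2 * (b + 1)) * b < Rabs a).
  { replace (Rabs a / (2 * (b + 1)) * b) with (Rabs a * (b / (2 * (b+1)))) by (field; lra).
    assert (b / (2 * (b+1)) < 1). { apply Rmult_lt_reg_r with (2*(b+1)). lra. field_simplify; lra. }
    nra. }
  lra.
Qed.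

Lemma grad_core f g G1 G2 X K1 K2 : is_gradient f G1 X -> is_gradient g G2 X ->
  (forall t, f (madd X (mscal t K1)) - f X = g (madd X (mscal t K2)) - g X) ->
  inner G1 K1 = inner G2 K2.
Proof.
  intros H1 H2 E. apply Rminus_diag_uniq.
  apply small_zero with (mnorm K1 + mnorm K2).
  { pose proof (mnorm_nonneg K1); pose proof (mnorm_nonneg K2); lra. }
  intros eps He.
  destruct (grad_dir f G1 X K1 H1 eps He) as [d1 [Hd1 F1]].
  destruct (grad_dir g G2 X K2 H2 eps He) as [d2 [Hd2 F2]].
  set (t := Rmin d1 d2 / 2).
  assert (Ht : 0 < t) by (unfold t; pose proof (Rmin_pos d1 d2 Hd1 Hd2); lra).
  assert (Ht1 : Rabs t < d1) by (rewrite Rabs_pos_eq by lra; unfold t; pose proof (Rmin_l d1 d2); lra).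
  assert (Ht2 : Rabs t < d2) by (rewrite Rabs_pos_eq by lra; unfold t; pose proof (Rmin_r d1 d2); lra).
  specialize (F1 t Ht1). specialize (F2 t Ht2). rewrite (Rabs_pos_eq t) in F1, F2 by lra.
  rewrite E in F1.
  assert (Rabs (t * (inner G1 K1 - inner G2 K2)) <= t * (eps * (mnorm K1 + mnorm K2))).
  { replace (t * (inner G1 K1 - inner G2 K2)) with
      (- (g (madd X (mscal t K2)) - g X - t * inner G1 K1) + (g (madd X (mscal t K2)) - g X - t * inner G2 K2)) by ring.
    eapply Rle_trans. apply Rabs_triang. rewrite Rabs_Ropp. nra. }
  rewrite Rabs_mult, (Rabs_pos_eq t) in H by lra.
  apply Rmult_le_reg_l with t; lra.
Qed.

Lemma grad_unique f G G' X : is_gradient f G X -> is_gradient f G' X -> G = G'.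
Proof.
  intros H1 H2. apply inner_eq0.
  assert (E : inner G (msub G G') = inner G' (msub G G')) by (apply (grad_core f f G G' X); auto).
  rewrite id1.
  lra.
Qed.

Lemma lin_pre f G A B X : is_gradient f G (mmul (mmul A X) B) ->
  is_gradient (fun Y => f (mmul (mmul A Y) B)) (mmul (mmul (mtr A) G) (mtr B)) X.
Proof.
  intros Hg eps He.
  set (c := mnorm A * mnorm B + 1).
  assert (Hc : 0 < c) by (unfold c; pose proof (mnorm_nonneg A); pose proof (mnorm_nonneg B); nra).
  destruct (Hg (eps / c)) as [d [Hd Hf]]. apply Rdiv_lt_0_compat; lra.
  exists (d / c). split. apply Rdiv_lt_0_compat; lra.
  intros H HH.
  assert (Hn : mnorm (mmul (mmul A H) B) <= c * mnorm H).
  { eapply Rle_trans. apply mnorm_mul. pose proof (mnorm_mul A H).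
    pose proof (mnorm_nonneg A); pose proof (mnorm_nonneg B); pose proof (mnorm_nonneg H).
    unfold c. nra. }
  rewrite mmul_maddr, mmul_maddl.
  rewrite id3.
  eapply Rle_trans. apply Hf.
  - apply Rle_lt_trans with (c * mnorm H); auto.
    apply Rmult_lt_reg_r with (/ c). apply Rinv_0_lt_compat; lra.
    replace (c * mnorm H * / c) with (mnorm H) by (field; lra). auto.
  - apply Rle_trans with (eps / c * (c * mnorm H)).
    apply Rmult_le_compat_l; auto. left; apply Rdiv_lt_0_compat; lra.
    right; field; lra.
Qed.

Lemma tr_pre f G X : is_gradient f G (mtr X) -> is_gradient (fun Y => f (mtr Y)) (mtr G) X.
Proof.
  intros Hg eps He. destruct (Hg eps He) as [d [Hd Hf]]. exists d; split; auto.
  intros H HH. rewrite mtr_madd.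
  rewrite id5.
  rewrite <- (mnorm_mtr H). apply Hf. rewrite mnorm_mtr; auto.
Qed.

Lemma chain_sq g G F : is_gradient g G (mmul (mtr F) F) ->
  is_gradient (fun Y => g (mmul (mtr Y) Y)) (mmul F (madd G (mtr G))) F.
Proof.
  intros Hg eps He.
  set (c := 2 * mnorm F + 1).
  assert (Hc : 0 < c) by (unfold c; pose proof (mnorm_nonneg F); lra).
  destruct (Hg (eps / (2 * c))) as [d [Hd Hf]]. apply Rdiv_lt_0_compat; lra.
  set (gn := mnorm G + 1).
  assert (Hgn : 0 < gn) by (unfold gn; pose proof (mnorm_nonneg G); lra).
  exists (Rmin 1 (Rmin (d / c) (eps / (2 * gn)))). split.
  { repeat apply Rmin_pos; try lra; apply Rdiv_lt_0_compat; lra. }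
  intros H HH.
  assert (H1 : mnorm H < 1) by (eapply Rlt_le_trans; [exact HH| apply Rmin_l]).
  assert (H2 : mnorm H < d / c) by (eapply Rlt_le_trans; [exact HH| eapply Rle_trans; [apply Rmin_r| apply Rmin_l]]).
  assert (H3 : mnorm H < eps / (2 * gn)) by (eapply Rlt_le_trans; [exact HH| eapply Rle_trans; [apply Rmin_r| apply Rmin_r]]).
  set (Dl := madd (madd (mmul (mtr F) H) (mmul (mtr H) F)) (mmul (mtr H) H)).
  rewrite id6. fold Dl.
  pose proof (mnorm_nonneg H) as Hn0. pose proof (mnorm_nonneg F) as HF0.
  assert (HD : mnorm Dl <= c * mnorm H).
  { unfold Dl. eapply Rle_trans. apply mnorm_tri. eapply Rle_trans. apply Rplus_le_compat. apply mnorm_tri.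
    apply mnorm_mul. eapply Rle_trans. apply Rplus_le_compat. apply Rplus_le_compat. apply mnorm_mul. apply mnorm_mul. apply Rle_refl.
    rewrite !mnorm_mtr. unfold c. nra. }
  assert (HDd : mnorm Dl < d).
  { apply Rle_lt_trans with (c * mnorm H); auto.
    apply Rmult_lt_reg_r with (/ c). apply Rinv_0_lt_compat; lra.
    replace (c * mnorm H * / c) with (mnorm H) by (field; lra). auto. }
  specialize (Hf Dl HDd).
  rewrite id7. fold Dl.
  assert (HR : Rabs (inner G (mmul (mtr H) H)) <= mnorm G * (mnorm H * mnorm H)).
  { eapply Rle_trans. apply CS. apply Rmult_le_compat_l. apply mnorm_nonneg.
    eapply Rle_trans; [apply mnorm_mul|]. rewrite mnorm_mtr; lra. }
  assert (HR2 : mnorm G * (mnorm H * mnorm H) <= eps / 2 * mnorm H).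
  { assert (mnorm G * mnorm H <= eps / 2).
    { apply Rle_trans with (gn * mnorm H). unfold gn; nra.
      apply Rmult_le_reg_r with (/ gn). apply Rinv_0_lt_compat; lra.
      replace (gn * mnorm H * / gn) with (mnorm H) by (field; lra).
      replace (eps / 2 * / gn) with (eps / (2 * gn)) by (field; lra). lra. }
    nra. }
  assert (HR3 : eps / (2 * c) * mnorm Dl <= eps / 2 * mnorm H).
  { apply Rle_trans with (eps / (2 * c) * (c * mnorm H)).
    apply Rmult_le_compat_l; auto. left; apply Rdiv_lt_0_compat; lra.
    right; field; lra. }
  replace (g (madd (mmul (mtr F) F) Dl) - g (mmul (mtr F) F) - (inner G Dl - inner G (mmul (mtr H) H)))
    with ((g (madd (mmul (mtr F) F) Dl) - g (mmul (mtr F) F) - inner G Dl) + inner G (mmul (mtr H) H)) by ring.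
  eapply Rle_trans. apply Rabs_triang. lra.
Qed.


Ltac mnorm_tac := repeat first [rewrite mmul_maddr | rewrite mmul_maddl | rewrite mmul_scal_l | rewrite mmul_scal_r | rewrite mmul_1r | rewrite mmul_1l | rewrite mscal_mscal | rewrite mmul_assoc].

Lemma cancel_l A B X : mmul A B = mId -> mmul A (mmul B X) = X.
Proof. intros H; rewrite <- mmul_assoc, H, mmul_1l; auto. Qed.

Lemma dev_conj Q M : mmul (mtr Q) Q = mId -> mmul Q (mtr Q) = mId ->
  dev3 (mmul (mmul (mtr Q) M) Q) = mmul (mmul (mtr Q) (dev3 M)) Q.
Proof.
  intros H1 H2. assert (T : trace (mmul (mmul (mtr Q) M) Q) = trace M).
  { rewrite trace_comm, <- mmul_assoc, H2, mmul_1l; auto. }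
  unfold dev3. rewrite T. unfold msub. mnorm_tac. rewrite H1. auto.
Qed.

Lemma inner_conj Q M : mmul Q (mtr Q) = mId ->
  inner (mmul (mmul (mtr Q) M) Q) (mmul (mmul (mtr Q) M) Q) = inner M M.
Proof.
  intros H. unfold inner. rewrite !mtr_mmul, mtr_mtr, !mmul_assoc, (cancel_l Q (mtr Q)) by auto.
  rewrite trace_comm, !mmul_assoc, H, mmul_1r. reflexivity.
Qed.

Lemma norm_conj Q M : mmul (mtr Q) Q = mId -> mmul Q (mtr Q) = mId ->
  mnorm (dev3 (mmul (mmul (mtr Q) M) Q)) = mnorm (dev3 M).
Proof. intros H1 H2. unfold mnorm. rewrite dev_conj, inner_conj; auto. Qed.

Lemma dev_sim A Ai M : mmul Ai A = mId -> mmul A Ai = mId ->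
  dev3 (mmul (mmul A M) Ai) = mmul (mmul A (dev3 M)) Ai.
Proof.
  intros H1 H2. assert (T : trace (mmul (mmul A M) Ai) = trace M).
  { rewrite trace_comm, <- mmul_assoc, H1, mmul_1l; auto. }
  unfold dev3. rewrite T. unfold msub. mnorm_tac. rewrite H2. auto.
Qed.

Lemma dev_norm_sq M : mnorm (dev3 M) * mnorm (dev3 M) = inner M M - trace M * trace M / 3.
Proof. rewrite mnorm_sq. dM; evall; field. Qed.

Lemma sym_dev M : mtr M = M -> mtr (dev3 M) = dev3 M.
Proof. intros H. unfold dev3, msub. rewrite mtr_madd, !mtr_mscal, mtr_mId, H. auto. Qed.

Lemma madd_double D : madd D D = mscal 2 D. Proof. mxr. Qed.
Lemma msym_sym Y : mtr Y = Y -> msym Y = Y.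
Proof. intros H. unfold msym. rewrite H, madd_double, mscal_mscal. replace (1/2*2) with 1 by field. apply mscal_1. Qed.


Lemma det_comm A B : det (mmul A B) = det (mmul B A).
Proof. rewrite !det_mmul; ring. Qed.
Lemma trcof_mtr A : trace (cof (mtr A)) = trace (cof A). Proof. mxr. Qed.

Lemma Wt_comm Psi A B : Wt_of Psi (mmul A B) = Wt_of Psi (mmul B A).
Proof. unfold Wt_of. rewrite trace_comm, trcof_comm, det_comm. auto. Qed.
Lemma Wt_mtr Psi A : Wt_of Psi (mtr A) = Wt_of Psi A.
Proof. unfold Wt_of. rewrite trace_mtr, trcof_mtr, det_mtr. auto. Qed.

Lemma octant_comm A B : octant (trace (mmul A B)) (trace (cof (mmul A B))) (det (mmul A B)) ->
  octant (trace (mmul B A)) (trace (cof (mmul B A))) (det (mmul B A)).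
Proof. rewrite trace_comm, trcof_comm, det_comm. auto. Qed.

Lemma octant_gram G : det G <> 0 ->
  octant (trace (mmul (mtr G) G)) (trace (cof (mmul (mtr G) G))) (det (mmul (mtr G) G)).
Proof.
  intros HG. split; [|split].
  - assert (E : trace (mmul (mtr G) G) = inner (msub G (mscal 0 G)) (msub G (mscal 0 G))) by mxr.
    rewrite E. destruct (inner_nonneg (msub G (mscal 0 G))) as [h|h]; auto.
    exfalso. apply HG. symmetry in h. apply inner_eq0 in h. rewrite h. mxr.
  - assert (E : trace (cof (mmul (mtr G) G)) = inner (msub (cof G) (mscal 0 G)) (msub (cof G) (mscal 0 G))) by mxr.
    rewrite E. destruct (inner_nonneg (msub (cof G) (mscal 0 G))) as [h|h]; auto.
    exfalso. apply HG. symmetry in h. apply inner_eq0 in h.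
    assert (E2 : 3 * det G = inner G (cof G)) by mxr. rewrite h, inner_scal_r in E2. lra.
  - rewrite det_mmul, det_mtr. assert (0 < det G * det G). { destruct (Rlt_or_le 0 (det G)); [nra|]. destruct H; nra. } lra.
Qed.

Lemma comm_lemma Psi E X : is_gradient (Wt_of Psi) E X -> mmul E (mtr X) = mmul (mtr X) E.
Proof.
  intros HE. set (S := msub (mmul E (mtr X)) (mmul (mtr X) E)).
  assert (K : inner E (mmul S X) = inner E (mmul X S)).
  { apply (grad_core (Wt_of Psi) (Wt_of Psi) E E X); auto.
    intros t. replace (madd X (mscal t (mmul S X))) with (mmul (madd mId (mscal t S)) X) by mxr.
    replace (madd X (mscal t (mmul X S))) with (mmul X (madd mId (mscal t S))) by mxr.
    rewrite Wt_comm. auto. }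
  apply inner_eq0. fold S.
  assert (E2 : inner S S = inner E (mmul S X) - inner E (mmul X S)) by (unfold S; mxr).
  lra.
Qed.


Lemma alg (DW DWt : M3 -> M3) (F Fp Up D : M3)
  (HFp : det Fp > 0) (HUp : det Up > 0) (HUs : mtr Up = Up)
  (HUp_sq : mmul Up Up = mmul (mtr Fp) Fp)
  (HDs : mtr D = D)
  (HDc : mmul D (mmul (mtr (mmul F (minv Fp))) (mmul F (minv Fp))) = mmul (mmul (mtr (mmul F (minv Fp))) (mmul F (minv Fp))) D)
  (HDW : DW (mmul F (minv Fp)) = mmul (mmul F (minv Fp)) (madd D (mtr D)))
  (HDWt : DWt (mmul (mmul (mtr F) F) (minv (mmul (mtr Fp) Fp))) = mmul (mmul (minv Fp) D) Fp) :
  let C := mmul (mtr F) F in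
  let Cp := mmul (mtr Fp) Fp in
  let Rp := mmul Fp (minv Up) in
  let Fe := mmul F (minv Fp) in
  let Sigma_e := mmul (mtr Fe) (DW Fe) in
  let tau_e := mmul (DW Fe) (mtr Fe) in
  let Sigma_t := mscal 2 (mmul (mmul C (DWt (mmul C (minv Cp)))) (minv Cp)) in
  let Sigma_o := mscal 2 (mmul (mmul (minv Up)
                   (msym (mmul C (DWt (mmul C (minv Cp)))))) (minv Up)) in
  (mmul (mtr Rp) Rp = mId /\ det Rp = 1) /\
  Sigma_o = mmul (mmul (mtr Rp) Sigma_e) Rp /\
  mmul (mmul (mtr Rp) Sigma_e) Rp = mmul (mmul (minv Up) Sigma_t) Up /\
  Sigma_t = mmul (mmul Up Sigma_o) (minv Up) /\
  mnorm (dev3 Sigma_o) = mnorm (dev3 Sigma_e) /\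
  trace (mmul (dev3 Sigma_t) (dev3 Sigma_t))
    = (mnorm (dev3 (mmul (mmul (minv Up) Sigma_t) Up))) ^ 2 /\
  (mnorm (dev3 (mmul (mmul (minv Up) Sigma_t) Up))) ^ 2
    = (mnorm (dev3 Sigma_o)) ^ 2 /\
  (mnorm (dev3 Sigma_o)) ^ 2 >= 0 /\
  sqrt (trace (mmul (dev3 Sigma_t) (dev3 Sigma_t))) = mnorm (dev3 Sigma_e) /\
  mnorm (dev3 Sigma_e) = mnorm (dev3 tau_e).
Proof.
  intros C Cp Rp Fe Se tau St So.
  assert (nFp : det Fp <> 0) by lra. assert (nUp : det Up <> 0) by lra.
  set (Fpi := minv Fp) in *. set (Ui := minv Up) in *.
  assert (L1 : mmul Fpi Fp = mId) by (apply minv_l; auto).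
  assert (L2 : mmul Fp Fpi = mId) by (apply minv_r; auto).
  assert (L3 : mmul Ui Up = mId) by (apply minv_l; auto).
  assert (L4 : mmul Up Ui = mId) by (apply minv_r; auto).
  assert (L5 : mtr Ui = Ui) by (apply minv_sym; auto).
  assert (L6 : mmul (mtr Fpi) (mtr Fp) = mId) by (rewrite <- mtr_mmul, L2, mtr_mId; auto).
  assert (L7 : mmul (mtr Fp) (mtr Fpi) = mId) by (rewrite <- mtr_mmul, L1, mtr_mId; auto).
  assert (HCpi : minv Cp = mmul Fpi (mtr Fpi)).
  { unfold Cp. rewrite minv_mmul, minv_mtr; auto. rewrite det_mtr; auto. }
  set (Ce := mmul (mtr Fe) Fe) in *.
  assert (HCe : Ce = mmul (mmul (mtr Fpi) C) Fpi).
  { unfold Ce, Fe, C. rewrite mtr_mmul, !mmul_assoc. reflexivity. }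
  set (M := mmul Ce D).
  assert (HMs : mtr M = M).
  { unfold M. rewrite mtr_mmul, HDs. assert (mtr Ce = Ce) by (unfold Ce; rewrite mtr_mmul, mtr_mtr; auto). rewrite H. auto. }
  assert (HE : DWt (mmul C (minv Cp)) = mmul (mmul Fpi D) Fp) by exact HDWt.
  assert (HDWe : DW Fe = mmul Fe (madd D (mtr D))) by exact HDW.
  assert (HSe : Se = mscal 2 M).
  { unfold Se. rewrite HDWe, HDs, madd_double, !mmul_scal_r, <- mmul_assoc. reflexivity. }
  assert (Htau : tau = mscal 2 (mmul (mmul Fe D) (mtr Fe))).
  { unfold tau. rewrite HDWe, HDs, madd_double, mmul_scal_r, mmul_scal_l. reflexivity. }
  assert (HY : mmul C (mmul (mmul Fpi D) Fp) = mmul (mmul (mtr Fp) M) Fp).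
  { unfold M. rewrite HCe, !mmul_assoc, (cancel_l (mtr Fp) (mtr Fpi)) by auto. reflexivity. }
  assert (HRt : mtr Rp = mmul Ui (mtr Fp)) by (unfold Rp; rewrite mtr_mmul, L5; auto).
  assert (HSo : So = mmul (mmul (mtr Rp) (mscal 2 M)) Rp).
  { unfold So. rewrite HE, HY, msym_sym. rewrite HRt. unfold Rp. mnorm_tac. reflexivity.
    rewrite !mtr_mmul, mtr_mtr, HMs, mmul_assoc. reflexivity. }
  assert (HSt : St = mscal 2 (mmul (mmul (mtr Fp) M) (mtr Fpi))).
  { unfold St. rewrite HE, HCpi. f_equal. rewrite HY. rewrite !mmul_assoc, (cancel_l Fp Fpi) by auto. reflexivity. }
  assert (HR1 : mmul (mtr Rp) Rp = mId).
  { rewrite HRt. unfold Rp. rewrite !mmul_assoc, <- (mmul_assoc (mtr Fp) Fp Ui), <- HUp_sq, mmul_assoc,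
      (cancel_l Ui Up) by auto. auto. }
  assert (HdU : det Up = det Fp).
  { assert (h := f_equal det HUp_sq). rewrite !det_mmul, det_mtr in h. nra. }
  assert (HdR : det Rp = 1).
  { unfold Rp. rewrite det_mmul. unfold Ui. rewrite det_minv, HdU by auto. field; lra. }
  assert (HR2 : mmul Rp (mtr Rp) = mId).
  { assert (h : Rp = minv (mtr Rp)) by (apply inv_unique; auto; rewrite det_mtr; lra).
    rewrite h at 1. apply minv_l. rewrite det_mtr; lra. }
  assert (K1 : mmul (mtr Fpi) Up = mmul Fp Ui).
  { rewrite <- (mmul_1r Up) at 1. rewrite <- L4, <- (mmul_assoc Up Up Ui), HUp_sq, !mmul_assoc, (cancel_l (mtr Fpi) (mtr Fp)) by auto. reflexivity. }
  assert (G3 : mmul (mmul (mtr Rp) Se) Rp = mmul (mmul Ui St) Up).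
  { rewrite HSe, HSt, HRt. unfold Rp. mnorm_tac. rewrite K1. reflexivity. }
  assert (G2 : So = mmul (mmul (mtr Rp) Se) Rp) by (rewrite HSo, HSe; reflexivity).
  assert (G4 : St = mmul (mmul Up So) Ui).
  { rewrite G2, G3, !mmul_assoc, (cancel_l Up Ui) by auto. rewrite L4, mmul_1r. reflexivity. }
  assert (G5 : mnorm (dev3 So) = mnorm (dev3 Se)) by (rewrite G2; apply norm_conj; auto).
  assert (HSos : mtr So = So).
  { rewrite HSo, !mtr_mmul, mtr_mtr, mtr_mscal, HMs, !mmul_assoc. reflexivity. }
  assert (HN : mtr (dev3 So) = dev3 So) by (apply sym_dev; auto).
  assert (G6 : trace (mmul (dev3 St) (dev3 St)) = inner (dev3 So) (dev3 So)).
  { rewrite G4, dev_sim by auto. unfold inner. rewrite HN. rewrite !mmul_assoc, (cancel_l Ui Up) by auto.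
    rewrite trace_comm, !mmul_assoc, L3, mmul_1r. reflexivity. }
  assert (G7 : mmul (mmul Ui St) Up = So) by (rewrite <- G3, G2; reflexivity).
  rewrite G7.
  assert (P2 : forall x, x ^ 2 = x * x) by (intros; ring).
  rewrite P2, mnorm_sq.
  split; [split; auto|]. split; [auto|]. split; [rewrite G3; exact G7|]. split; [auto|]. split; [auto|].
  split; [auto|]. split; [auto|]. split; [apply Rle_ge, inner_nonneg|].
  split.
  { rewrite G6, <- G5. reflexivity. }
  assert (T1 : trace Se = trace tau).
  { rewrite HSe, Htau, !trace_mscal. unfold M, Ce. rewrite (trace_comm (mmul Fe D) (mtr Fe)), !mmul_assoc. reflexivity. }
  assert (T2 : inner Se Se = inner tau tau).
  { rewrite HSe, Htau, !inner_scal_l, !inner_scal_r. f_equal. f_equal. unfold inner. rewrite HMs.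
    rewrite !mtr_mmul, mtr_mtr, HDs. unfold M, Ce. rewrite !mmul_assoc.
    rewrite (trace_comm Fe), !mmul_assoc, (trace_comm D), !mmul_assoc. reflexivity. }
  assert (S : mnorm (dev3 Se) * mnorm (dev3 Se) = mnorm (dev3 tau) * mnorm (dev3 tau)) by (rewrite !dev_norm_sq, T1, T2; auto).
  apply Rsqr_inj; auto using mnorm_nonneg.
Qed.


Theorem mainTheorem8
  (Psi d1 d2 d3 : R -> R -> R -> R)
  (HPsi : C1_octant Psi d1 d2 d3)
  (DW DWt : M3 -> M3)
  (HDW : forall X, det X > 0 -> is_gradient (W_of Psi) (DW X) X)
  (HDWt : forall X, octant (trace X) (trace (cof X)) (det X) ->
            is_gradient (Wt_of Psi) (DWt X) X)
  (F Fp Up : M3)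
  (HF : det F > 0) (HFp : det Fp > 0)
  (HUp_sym : symmetric Up) (HUp_pd : posdef Up)
  (HUp_sq : mmul Up Up = mmul (mtr Fp) Fp) :
  let C := mmul (mtr F) F in
  let Cp := mmul (mtr Fp) Fp in
  let Rp := mmul Fp (minv Up) in
  let Fe := mmul F (minv Fp) in
  let Sigma_e := mmul (mtr Fe) (DW Fe) in
  let tau_e := mmul (DW Fe) (mtr Fe) in
  let Sigma_t := mscal 2 (mmul (mmul C (DWt (mmul C (minv Cp)))) (minv Cp)) in
  let Sigma_o := mscal 2 (mmul (mmul (minv Up)
                   (msym (mmul C (DWt (mmul C (minv Cp)))))) (minv Up)) in
  (mmul (mtr Rp) Rp = mId /\ det Rp = 1) /\
  Sigma_o = mmul (mmul (mtr Rp) Sigma_e) Rp /\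
  mmul (mmul (mtr Rp) Sigma_e) Rp = mmul (mmul (minv Up) Sigma_t) Up /\
  Sigma_t = mmul (mmul Up Sigma_o) (minv Up) /\
  mnorm (dev3 Sigma_o) = mnorm (dev3 Sigma_e) /\
  trace (mmul (dev3 Sigma_t) (dev3 Sigma_t))
    = (mnorm (dev3 (mmul (mmul (minv Up) Sigma_t) Up))) ^ 2 /\
  (mnorm (dev3 (mmul (mmul (minv Up) Sigma_t) Up))) ^ 2
    = (mnorm (dev3 Sigma_o)) ^ 2 /\
  (mnorm (dev3 Sigma_o)) ^ 2 >= 0 /\
  sqrt (trace (mmul (dev3 Sigma_t) (dev3 Sigma_t))) = mnorm (dev3 Sigma_e) /\
  mnorm (dev3 Sigma_e) = mnorm (dev3 tau_e).
Proof.
  assert (nFp : det Fp <> 0) by lra.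
  assert (HUp : det Up > 0) by (apply posdef_det; auto).
  set (Fpi := minv Fp).
  assert (L1 : mmul Fpi Fp = mId) by (apply minv_l; auto).
  assert (L2 : mmul Fp Fpi = mId) by (apply minv_r; auto).
  assert (L6 : mmul (mtr Fpi) (mtr Fp) = mId) by (rewrite <- mtr_mmul, L2, mtr_mId; auto).
  assert (L7 : mmul (mtr Fp) (mtr Fpi) = mId) by (rewrite <- mtr_mmul, L1, mtr_mId; auto).
  set (Fe := mmul F Fpi).
  set (Ce := mmul (mtr Fe) Fe).
  set (D := DWt Ce).
  assert (HFe : det Fe > 0).
  { unfold Fe, Fpi. rewrite det_mmul, det_minv by auto. apply Rmult_gt_0_compat; auto. apply Rinv_0_lt_compat; auto. }
  assert (Hoct : octant (trace Ce) (trace (cof Ce)) (det Ce)) by (apply octant_gram; lra).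
  assert (HDg : is_gradient (Wt_of Psi) D Ce) by (apply HDWt; auto).
  assert (HCes : mtr Ce = Ce) by (unfold Ce; rewrite mtr_mmul, mtr_mtr; auto).
  assert (HDs : mtr D = D).
  { assert (h : is_gradient (Wt_of Psi) D (mtr Ce)) by (rewrite HCes; auto).
    apply tr_pre in h. apply (is_gradient_ext _ (Wt_of Psi)) in h; [|intros; apply Wt_mtr].
    eapply grad_unique; eauto. }
  assert (HDc : mmul D Ce = mmul Ce D).
  { assert (h := comm_lemma Psi D Ce HDg). rewrite HCes in h. auto. }
  assert (HDWe : DW Fe = mmul Fe (madd D (mtr D))).
  { assert (h1 := HDW Fe HFe). assert (h2 := chain_sq (Wt_of Psi) D Fe HDg).
    apply (is_gradient_ext _ (W_of Psi)) in h2; [|intros; reflexivity].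
    eapply grad_unique; eauto. }
  set (X := mmul (mmul (mtr F) F) (minv (mmul (mtr Fp) Fp))).
  assert (HX : X = mmul (mmul (mmul (mtr F) F) Fpi) (mtr Fpi)).
  { unfold X. rewrite (minv_mmul (mtr Fp) Fp); [| rewrite det_mtr; auto | auto].
    rewrite minv_mtr by auto. fold Fpi. rewrite (mmul_assoc (mmul (mtr F) F) Fpi (mtr Fpi)). reflexivity. }
  assert (HCe : Ce = mmul (mtr Fpi) (mmul (mmul (mtr F) F) Fpi)).
  { unfold Ce, Fe. rewrite mtr_mmul, !mmul_assoc. reflexivity. }
  assert (HoX : octant (trace X) (trace (cof X)) (det X)).
  { rewrite HX. apply octant_comm. rewrite <- HCe. auto. }
  assert (HEg : is_gradient (Wt_of Psi) (DWt X) X) by (apply HDWt; auto).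
  assert (HXC : mmul (mmul (mtr Fpi) X) (mtr Fp) = Ce).
  { rewrite HX, HCe, !mmul_assoc, L6, mmul_1r. reflexivity. }
  assert (HDX : DWt X = mmul (mmul Fpi D) Fp).
  { assert (h : is_gradient (Wt_of Psi) D (mmul (mmul (mtr Fpi) X) (mtr Fp))) by (rewrite HXC; auto).
    apply lin_pre in h. rewrite !mtr_mtr in h.
    apply (is_gradient_ext _ (Wt_of Psi)) in h.
    - eapply grad_unique; eauto.
    - intros Y. rewrite Wt_comm, <- mmul_assoc, L7, mmul_1l. reflexivity. }
  exact (alg DW DWt F Fp Up D HFp HUp HUp_sym HUp_sq HDs HDc HDWe HDX).
Qed.
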